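(* Let $\mathcal R=(\mathbf N,G,\mathcal P)$ be a max game and let $\mathbf p$ be a routing. If a greedy move by some player $i$ takes $\mathbf p$ to a routing $\mathbf p'$, then $\mathbf p'<\mathbf p$ in the order defined below (i.e. $M(\mathbf p')<M(\mathbf p)$).
   Context: A routing game is a tuple $\mathcal R=(\mathbf N,G,\mathcal P)$: players $\mathbf N=\{1,\dots,N\}$ ($N\ge1$), a graph $G=(V,E)$ with $n=|V|$ nodes, and for each player $i$ a nonempty finite set $\mathcal P_i$ of paths in $G$ from a source $u_i$ to a destination $v_i$; $\mathcal P=\bigcup_i\mathcal P_i$. A routing is $\mathbf p=[p_1,\dots,p_N]$ with $p_i\in\mathcal P_i$; $(p_i';\mathbf p_{-i})$ denotes the routing obtained by replacing $p_i$ with $p_i'$. For an edge $e$, $C_e(\mathbf p)$ is the number of players $j$ with $e\in p_j$; $C_i(\mathbf p)=\max_{e\in p_i}C_e(\mathbf p)$; $D_i(\mathbf p)=|p_i|$ (number of edges); $C(\mathbf p)=\max_{e\in E}C_e(\mathbf p)$; $D(\mathbf p)=\max_i|p_i|$; $L=\max_{p\in\mathcal P}|p|$. A max game is a routing game with player cost $pc_i(\mathbf p)=\max(C_i(\mathbf p),D_i(\mathbf p))$ and social cost $SC(\mathbf p)=\max(C(\mathbf p),D(\mathbf p))$. A greedy move by player $i$ takes $\mathbf p$ to $\mathbf p'=(p_i';\mathbf p_{-i})$ for some $p_i'\in\mathcal P_i$ with $pc_i(\mathbf p')<pc_i(\mathbf p)$. Order: let $r=\max(N,L)$; the routing vector is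 $M(\mathbf p)=[m_1(\mathbf p),\dots,m_r(\mathbf p)]$ with $m_k(\mathbf p)=a_k(\mathbf p)+b_k(\mathbf p)$, where $a_k(\mathbf p)$ is the number of players $j$ with $C_j(\mathbf p)=k$ and $b_k(\mathbf p)$ is the number of players $j$ with $D_j(\mathbf p)=k$. Write $M(\mathbf p')<M(\mathbf p)$ (and $\mathbf p'<\mathbf p$) if there is $j\in\{1,\dots,r\}$ with $m_k(\mathbf p')=m_k(\mathbf p)$ for all $k>j$ and $m_j(\mathbf p')<m_j(\mathbf p)$. *)

(* Defs.v *)
From mathcomp Require Import all_boot.
Set Implicit Arguments. Unset Strict Implicit. Unset Printing Implicit Defensive.

Definition simple_graph (V : finType) (adj : rel V) : Prop :=
  symmetric adj /\ irreflexive adj.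

Definition is_path (V : finType) (adj : rel V) (u v : V) (s : seq V) : bool :=
  if s is x :: t then [&& x == u, path adj x t, last x t == v & uniq s]
  else false.

Definition edges_of (V : finType) (s : seq V) : seq {set V} :=
  [seq [set x.1; x.2] | x <- zip s (behead s)].

Definition plen (V : finType) (s : seq V) : nat := size (edges_of s).

Section Game.
Variables (V : finType) (N : nat).

Definition routing := 'I_N -> seq V.

Definition Ce (p : routing) (e : {set V}) : nat :=
  #|[set j : 'I_N | e \in edges_of (p j)]|.

Definition Ci (p : routing) (i : 'I_N) : nat :=
  \max_(e <- edges_of (p i)) Ce p e.

Definition Di (p : routing) (i : 'I_N) : nat := plen (p i).

Definition pc (p : routing) (i : 'I_N) : nat := maxn (Ci p i) (Di p i).

Definition replace (p : routing) (i : 'I_N) (q : seq V) : routing :=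
  fun j => if j == i then q else p j.

Definition Lmax (P : 'I_N -> seq (seq V)) : nat :=
  \max_(i < N) \max_(q <- P i) plen q.

Definition rbound (P : 'I_N -> seq (seq V)) : nat := maxn N (Lmax P).

Definition ak (p : routing) (k : nat) : nat := #|[set j : 'I_N | Ci p j == k]|.
Definition bk (p : routing) (k : nat) : nat := #|[set j : 'I_N | Di p j == k]|.
Definition mk (p : routing) (k : nat) : nat := ak p k + bk p k.

Definition routing_lt (P : 'I_N -> seq (seq V)) (p' p : routing) : Prop :=
  exists j : nat, [/\ 1 <= j <= rbound P,
    (forall k, j < k <= rbound P -> mk p' k = mk p k) &
    mk p' j < mk p j].

End Game.

(* Main.v *)
Require Import Defs.
From mathcomp Require Import all_boot.

Lemma max_ex {T : eqType} {s : seq T} {F : T -> nat} {t} :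
  0 < t -> t <= \max_(e <- s) F e -> exists2 e, e \in s & t <= F e.
Proof.
move=> t0; elim: s => [|x s IH]; first by rewrite big_nil leqNgt t0.
rewrite big_cons leq_max => /orP [H|H]; first by exists x; rewrite ?mem_head.
by case: (IH H) => e es He; exists e; rewrite // in_cons es orbT.
Qed.

Theorem mainTheorem1 (V : finType) (adj : rel V) (N : nat)
    (u v : 'I_N -> V) (P : 'I_N -> seq (seq V)) (p : routing V N)
    (i : 'I_N) (q : seq V) :
  simple_graph adj ->
  0 < N ->
  (forall j, P j != [::]) ->
  (forall j s, s \in P j -> is_path adj (u j) (v j) s) ->
  (forall j, p j \in P j) ->
  q \in P i ->
  pc (replace p i q) i < pc p i ->
  routing_lt P (replace p i q) p.
Proof.
move=> _ _ _ _ pP qP.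
set p' := replace p i q; set c := pc p i; set c' := pc p' i => hc.
have p'i : p' i = q by rewrite /p' /replace eqxx.
have p'j : forall j, j != i -> p' j = p j by move=> j /negbTE; rewrite /p' /replace => ->.
have F1 : forall e, e \in edges_of q -> Ce p' e <= c'.
  move=> e eq; apply: leq_trans (leq_maxl _ _); rewrite /Ci p'i.
  exact: (leq_bigmax_seq (F := Ce p') e eq).
have F4 : forall e, e \in edges_of (p i) -> Ce p e <= c.
  move=> e eq; apply: leq_trans (leq_maxl _ _).
  exact: (leq_bigmax_seq (F := Ce p) e eq).
have F2 : forall e, e \notin edges_of q -> Ce p' e <= Ce p e.
  move=> e en; apply: subset_leq_card; apply/subsetP => j; rewrite !inE.
  case: (eqVneq j i) => [->|ji]; first by rewrite p'i (negbTE en).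
  by rewrite p'j.
have F3 : forall e, e \notin edges_of (p i) -> Ce p e <= Ce p' e.
  move=> e en; apply: subset_leq_card; apply/subsetP => j; rewrite !inE.
  case: (eqVneq j i) => [->|ji]; first by rewrite (negbTE en).
  by rewrite p'j.
have T1 : forall j t, c' < t -> t <= Ci p' j -> t <= Ci p j.
  move=> j t ht hle; have t0 : 0 < t by apply: leq_ltn_trans ht.
  case: (max_ex (F := Ce _) t0 hle) => e ej he.
  have eq : e \notin edges_of q.
    by apply/negP => /F1 H; move: (leq_trans he H); rewrite leqNgt ht.
  apply: leq_trans (leq_trans he (F2 e eq)) _.
  case: (eqVneq j i) => [ji|ji].
    by move: eq; rewrite ji p'i in ej *; rewrite ej.
  rewrite p'j // in ej; exact: (leq_bigmax_seq (F := Ce p) e ej).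
have T2 : forall j t, c < t -> t <= Ci p j -> t <= Ci p' j.
  move=> j t ht hle; have t0 : 0 < t by apply: leq_ltn_trans ht.
  case: (max_ex (F := Ce _) t0 hle) => e ej he.
  have eq : e \notin edges_of (p i).
    by apply/negP => /F4 H; move: (leq_trans he H); rewrite leqNgt ht.
  apply: leq_trans (leq_trans he (F3 e eq)) _.
  case: (eqVneq j i) => [ji|ji].
    by move: eq; rewrite ji in ej; rewrite ej.
  rewrite /Ci p'j //; exact: (leq_bigmax_seq (F := Ce p') e ej).
have Ci'le : Ci p' i <= c' by apply: leq_maxl.
have Di'le : Di p' i <= c' by apply: leq_maxr.
have Dile : Di p i <= c by apply: leq_maxr.
have Cile : Ci p i <= c by apply: leq_maxl.
have Dj : forall j, j != i -> Di p' j = Di p j by move=> j ji; rewrite /Di p'j.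
have c0 : 0 < c by apply: leq_ltn_trans hc.
have Ceq : forall j k, c < k -> (Ci p' j == k) = (Ci p j == k).
  move=> j k hk; rewrite !eqn_leq.
  have hk' : c' < k by apply: ltn_trans hk.
  have E : forall t, c < t -> (t <= Ci p' j) = (t <= Ci p j).
    move=> t ht; apply/idP/idP; [apply: T1; exact: ltn_trans hc ht | exact: T2].
  rewrite [Ci p' j <= k]leqNgt [Ci p j <= k]leqNgt.
  by rewrite (E k.+1) ?(ltn_trans hk) // (E k).
have Deq : forall j k, c < k -> (Di p' j == k) = (Di p j == k).
  move=> j k hk; case: (eqVneq j i) => [->|ji]; last by rewrite Dj.
  have -> : (Di p' i == k) = false.
    by apply/negbTE; rewrite neq_ltn (leq_ltn_trans Di'le (ltn_trans hc hk)).
  by apply/esym/negbTE; rewrite neq_ltn (leq_ltn_trans Dile hk).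
have Meq : forall k, c < k -> mk p' k = mk p k.
  move=> k hk; rewrite /mk /ak /bk; congr (_ + _); apply: eq_card => j;
  by rewrite !inE ?Ceq ?Deq.
exists c; split.
- rewrite c0 /= /rbound /c /pc geq_max; apply/andP; split.
    apply: leq_trans (leq_maxl _ _); apply/bigmax_leqP_seq => e _ _.
    by rewrite /Ce; apply: leq_trans (max_card _) _; rewrite card_ord.
  apply: leq_trans (leq_maxr _ _); rewrite /Lmax.
  apply: leq_trans (leq_bigmax (F := fun j => \max_(q <- P j) plen q) i).
  exact: (leq_bigmax_seq (F := @plen V) _ (pP i)).
- by move=> k /andP [hk _]; apply: Meq.
rewrite /mk /ak /bk.
set A := [set j | Ci p j == c]; set B := [set j | Di p j == c].
have sA : [set j | Ci p' j == c] \subset A :\ i.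
  apply/subsetP => j; rewrite !inE => /eqP H.
  have ji : j != i by apply/eqP => E; move: Ci'le; rewrite -E H leqNgt hc.
  rewrite ji /= eqn_leq; apply/andP; split.
    case: (leqP (Ci p j) c) => // h.
    by move: (T2 j _ (leqnn _) h); rewrite H ltnn.
  by apply: T1; rewrite ?H.
have sB : [set j | Di p' j == c] \subset B :\ i.
  apply/subsetP => j; rewrite !inE => /eqP H.
  have ji : j != i by apply/eqP => E; move: Di'le; rewrite -E H leqNgt hc.
  by rewrite ji /= -Dj // H.
apply: (@leq_ltn_trans (#|A :\ i| + #|B :\ i|)).
  by apply: leq_add; apply: subset_leq_card.
rewrite [#|A|](cardsD1 i) [#|B|](cardsD1 i) addnACA.
rewrite -[X in X < _]add0n ltn_add2r.
rewrite !inE addn_gt0.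
by move: (leq_maxl (Ci p i) (Di p i)); rewrite /c /pc; case: (leqP (Ci p i) (Di p i)) => h;
  rewrite ?(maxn_idPr (ltnW _)) ?(maxn_idPl (ltnW _)) // => _; rewrite ?eqxx ?orbT.
Qed.
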